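(* Let $\mathcal X,\mathcal U$ be finite nonempty sets, $f:\mathcal X\times\mathcal U\to\mathcal X$, $\ell,g:\mathcal X\to\mathbb R$ and $\gamma\in(0,1)$. For a stochastic policy $\pi:\mathcal X\to\Delta(\mathcal U)$ let $\tilde V^{\gamma,\pi}_{\mathrm{RA}}:\mathcal X\to\mathbb R$ be the unique solution of $$\tilde V^{\gamma,\pi}_{\mathrm{RA}}(x)=(1-\gamma)\min\{\ell(x),g(x)\}+\gamma\,\mathbb E_{u\sim\pi(x)}\Big[\min\big\{\max\{\tilde V^{\gamma,\pi}_{\mathrm{RA}}(f(x,u)),\ell(x)\},g(x)\big\}\Big],$$ and let $V^{\gamma,*}_{\mathrm{RA}}:\mathcal X\to\mathbb R$ be the unique solution of $$V^{\gamma,*}_{\mathrm{RA}}(x)=(1-\gamma)\min\{\ell(x),g(x)\}+\gamma\min\Big\{\max\big\{\max_{u\in\mathcal U}V^{\gamma,*}_{\mathrm{RA}}(f(x,u)),\ell(x)\big\},g(x)\Big\}.$$ Then $\tilde V^{\gamma,\pi}_{\mathrm{RA}}\le V^{\gamma,*}_{\mathrm{RA}}$ pointwise for every stochastic policy $\pi$, and there exists a stochastic policy $\pi^*:\mathcal X\to\Delta(\mathcal U)$ with $\tilde V^{\gamma,\pi^*}_{\mathrm{RA}}=V^{\gamma,*}_{\mathrm{RA}}$.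
   Context: $\Delta(\mathcal U)$ denotes the set of probability distributions on $\mathcal U$. Both fixed-point equations are defined by $\gamma$-contractive operators on real functions on $\mathcal X$, so their solutions exist and are unique. *)

(* Defs.v *)
From HB Require Import structures.
From mathcomp Require Import all_boot all_order all_algebra.
From mathcomp Require Import reals.
From Stdlib Require Import ClassicalEpsilon.
Set Implicit Arguments. Unset Strict Implicit. Unset Printing Implicit Defensive.
Import Order.TTheory GRing.Theory Num.Theory.
Local Open Scope ring_scope.

Section RA.
Variables (R : realType) (X U : finType).

Definition is_dist (p : {ffun U -> R}) : Prop :=
  (forall u, 0 <= p u) /\ \sum_(u : U) p u = 1.

Definition stoch_policy (pi : X -> {ffun U -> R}) : Prop :=
  forall x, is_dist (pi x).

(* max over the (nonempty) finite set U; the default 0 is only used if U is empty *)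
Definition maxU (h : U -> R) : R :=
  match [pick u : U] with
  | Some u0 => \big[Num.max/h u0]_(u : U) h u
  | None => 0
  end.

Variables (f : X -> U -> X) (l g : X -> R) (gamma : R).

Definition RA_policy_eq (pi : X -> {ffun U -> R}) (V : X -> R) : Prop :=
  forall x, V x = (1 - gamma) * Num.min (l x) (g x)
    + gamma * \sum_(u : U) pi x u * Num.min (Num.max (V (f x u)) (l x)) (g x).

Definition RA_opt_eq (V : X -> R) : Prop :=
  forall x, V x = (1 - gamma) * Num.min (l x) (g x)
    + gamma * Num.min (Num.max (maxU (fun u => V (f x u))) (l x)) (g x).

(* "the unique solution": chosen by Hilbert's epsilon; it is the unique
   solution whenever one exists uniquely (gamma-contraction). *)
Definition V_RA_pi (pi : X -> {ffun U -> R}) : X -> R :=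
  epsilon (inhabits (fun _ => 0)) (RA_policy_eq pi).

Definition V_RA_star : X -> R :=
  epsilon (inhabits (fun _ => 0)) RA_opt_eq.

End RA.

(* Main.v *)
Require Import Defs.
From HB Require Import structures.
From mathcomp Require Import all_boot all_order all_algebra.
From mathcomp Require Import classical_sets reals.
From mathcomp Require Import lra.
From Stdlib Require Import ClassicalEpsilon FunctionalExtensionality.
Import Order.TTheory GRing.Theory Num.Theory.
Local Open Scope ring_scope.
Set Implicit Arguments. Unset Strict Implicit.

Section Abs.
Variables (R : realType) (X : finType) (gamma : R) (T : (X -> R) -> (X -> R)).
Hypothesis mono : forall V W, (forall x, V x <= W x) -> forall x, T V x <= T W x.

Lemma bigmax_seq_ub (I : eqType) (s : seq I) (h : I -> R) (x0 : R) i :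
  i \in s -> h i <= \big[Num.max/x0]_(v <- s) h v.
Proof.
elim: s => //= a s IH; rewrite in_cons big_cons => /orP [/eqP ->|/IH H].
  by rewrite le_max lexx.
by rewrite le_max H orbT.
Qed.

Lemma bigmax_seq_init (I : Type) (s : seq I) (h : I -> R) (x0 : R) :
  x0 <= \big[Num.max/x0]_(v <- s) h v.
Proof. by elim: s => [|a s IH]; rewrite ?big_nil ?big_cons // le_max IH orbT. Qed.

Lemma compare (hg0 : 0 <= gamma) (hg1 : gamma < 1)
  (shift : forall V c, 0 <= c -> forall x, T (fun y => V y + c) x <= T V x + gamma * c)
  V W : (forall x, V x <= T V x) -> (forall x, T W x <= W x) -> forall x, V x <= W x.
Proof.
move=> HV HW x.
set c := \big[Num.max/0]_y (V y - W y).
have c0 : 0 <= c by apply: bigmax_seq_init.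
have hub : forall y, V y - W y <= c.
  by move=> y; apply: (@bigmax_seq_ub _ _ (fun y => V y - W y)); rewrite mem_index_enum.
have key : forall y, V y - W y <= gamma * c.
  move=> y.
  have h1 : V y <= T (fun z => W z + c) y.
    apply: le_trans (HV y) _; apply: mono => z; have := hub z; lra.
  have := shift W c c0 y; have := HW y; lra.
have cc : c <= gamma * c.
  apply: (big_ind (fun z : R => z <= gamma * c)) => //; first by apply: mulr_ge0.
  by move=> a b ha hb; rewrite ge_max ha.
have : c <= 0 by nra.
have := hub x; lra.
Qed.

Lemma exist_fix (B : X -> R) (V0 : X -> R) :
  (forall V x, T V x <= B x) -> (forall x, V0 x <= T V0 x) ->
  exists V, forall x, V x = T V x.
Proof.
move=> HB H0.
pose E (x : X) : set R := (fun r : R => exists V, (forall y, V y <= T V y) /\ r = V x).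
pose Vs x := sup (E x).
have hs : forall x, has_sup (E x).
  move=> x; split; first by exists (V0 x), V0.
  exists (B x); move=> r [V [HV ->]]; exact: le_trans (HV x) (HB V x).
have le : forall V, (forall y, V y <= T V y) -> forall x, V x <= Vs x.
  move=> V HV x; apply: sup_upper_bound (hs x) _ _; by exists V.
have h1 : forall x, Vs x <= T Vs x.
  move=> x; apply: ge_sup; first by exists (V0 x), V0.
  move=> r [V [HV ->]]; apply: le_trans (HV x) _; apply: mono; exact: le.
have h2 : forall x, T Vs x <= Vs x.
  apply: le => y; apply: mono; exact: h1.
by exists Vs => x; apply/eqP; rewrite eq_le h1 h2.
Qed.
End Abs.
Ltac mmcase := repeat match goal with
  | |- context[Num.max ?x ?y] => case: (leP x y) => ?
  | |- context[Num.min ?x ?y] => case: (leP x y) => ?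
  end.

Section Aux.
Variable R : realType.

Lemma mm_mono (a b l g : R) : a <= b ->
  Num.min (Num.max a l) g <= Num.min (Num.max b l) g.
Proof. move=> ab; mmcase; lra. Qed.

Lemma mm_shift (a l g c : R) : 0 <= c ->
  Num.min (Num.max (a + c) l) g <= Num.min (Num.max a l) g + c.
Proof. move=> c0; mmcase; lra. Qed.

Lemma mm_ge (a l g : R) : Num.min l g <= Num.min (Num.max a l) g.
Proof. mmcase; lra. Qed.
Lemma mm_le (a l g : R) : Num.min (Num.max a l) g <= g.
Proof. mmcase; lra. Qed.
Lemma min_le (l g : R) : Num.min l g <= g.
Proof. mmcase; lra. Qed.
End Aux.
Section Conc.
Variables (R : realType) (X U : finType).
Hypothesis hU : (0 < #|U|)%N.
Variables (f : X -> U -> X) (l g : X -> R) (gamma : R).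
Hypotheses (hg0 : 0 < gamma) (hg1 : gamma < 1).
Let hg1m : 0 <= 1 - gamma. Proof. by rewrite subr_ge0 ltW. Qed.
Let hg0w : 0 <= gamma. Proof. exact: ltW. Qed.

Lemma maxU_ub (h : U -> R) u : h u <= maxU h.
Proof.
rewrite /maxU; case: pickP => [u0 _|H]; last by have := H u.
by apply: (@bigmax_seq_ub R _ _ h); rewrite mem_index_enum.
Qed.

Lemma maxU_arg (h : U -> R) : exists u, maxU h = h u.
Proof.
rewrite /maxU; case: pickP => [u0 _|H].
  by apply: (big_ind (fun z => exists u, z = h u)) => [|a b [u ->] [v ->]|u _];
    [exists u0|case: (leP (h u) (h v)) => _; [exists v|exists u]|exists u].
by move: hU; rewrite lt0n => /pred0Pn [u _]; have := H u.
Qed.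

Definition Topt (V : X -> R) x := (1 - gamma) * Num.min (l x) (g x)
    + gamma * Num.min (Num.max (maxU (fun u => V (f x u))) (l x)) (g x).
Definition Tpi (pi : X -> {ffun U -> R}) (V : X -> R) x := (1 - gamma) * Num.min (l x) (g x)
    + gamma * \sum_(u : U) pi x u * Num.min (Num.max (V (f x u)) (l x)) (g x).

Lemma Topt_mono V W : (forall x, V x <= W x) -> forall x, Topt V x <= Topt W x.
Proof.
move=> H x; rewrite /Topt lerD2l ler_pM2l //; apply: mm_mono.
have [u ->] := maxU_arg (fun u => V (f x u)).
exact: le_trans (H _) (maxU_ub (fun u => W (f x u)) u).
Qed.

Lemma Topt_shift V c : 0 <= c -> forall x,
  Topt (fun y => V y + c) x <= Topt V x + gamma * c.
Proof.
move=> c0 x; rewrite /Topt -addrA lerD2l -mulrDr ler_pM2l //.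
apply: (le_trans (y := Num.min (Num.max (maxU (fun u => V (f x u)) + c) (l x)) (g x))); last exact: mm_shift.
apply: mm_mono.
have [u ->] := maxU_arg (fun u => V (f x u) + c).
by rewrite lerD2r; apply: (maxU_ub (fun u => V (f x u))).
Qed.

Lemma Topt_B V x : Topt V x <= g x.
Proof.
rewrite /Topt; have := mm_le (maxU (fun u => V (f x u))) (l x) (g x).
have := min_le (l x) (g x).
move: (Num.min (l x) (g x)) (Num.min (Num.max _ _) _) => a b ha hb.
have h1 : (1 - gamma) * a <= (1 - gamma) * g x by apply: ler_wpM2l.
have h2 : gamma * b <= gamma * g x by apply: ler_wpM2l.
nra.
Qed.

Lemma Topt_V0 x : Num.min (l x) (g x) <= Topt (fun y => Num.min (l y) (g y)) x.
Proof.
rewrite /Topt; have := mm_ge (maxU (fun u => Num.min (l (f x u)) (g (f x u)))) (l x) (g x).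
move: (Num.min (l x) (g x)) (Num.min (Num.max _ _) _) => a b hb.
have h2 : gamma * a <= gamma * b by apply: ler_wpM2l.
nra.
Qed.

Variable pi : X -> {ffun U -> R}.
Hypothesis hpi : stoch_policy pi.

Lemma Tpi_mono V W : (forall x, V x <= W x) -> forall x, Tpi pi V x <= Tpi pi W x.
Proof.
move=> H x; rewrite /Tpi lerD2l ler_pM2l //; apply: ler_sum => u _.
by apply: ler_wpM2l; [case: (hpi x) | apply: mm_mono].
Qed.

Lemma Tpi_shift V c : 0 <= c -> forall x,
  Tpi pi (fun y => V y + c) x <= Tpi pi V x + gamma * c.
Proof.
move=> c0 x; rewrite /Tpi -addrA lerD2l -mulrDr ler_pM2l //.
have [p0 p1] := hpi x.
apply: (le_trans (y := \sum_(u : U) pi x u * (Num.min (Num.max (V (f x u)) (l x)) (g x) + c))).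
  apply: ler_sum => u _; apply: ler_wpM2l => //; exact: mm_shift.
by rewrite (eq_bigr _ (fun u _ => mulrDr _ _ _)) big_split /= -mulr_suml p1 mul1r.
Qed.

Lemma Tpi_B V x : Tpi pi V x <= g x.
Proof.
rewrite /Tpi; have [p0 p1] := hpi x.
have H : \sum_(u : U) pi x u * Num.min (Num.max (V (f x u)) (l x)) (g x) <= g x.
  apply: (le_trans (y := \sum_(u : U) pi x u * g x)); last by rewrite -mulr_suml p1 mul1r.
  by apply: ler_sum => u _; apply: ler_wpM2l => //; apply: mm_le.
have := min_le (l x) (g x).
move: (Num.min (l x) (g x)) (\sum_(u : U) _) H => a b H ha.
have h1 : (1 - gamma) * a <= (1 - gamma) * g x by apply: ler_wpM2l.
have h2 : gamma * b <= gamma * g x by apply: ler_wpM2l.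
nra.
Qed.

Lemma Tpi_V0 x : Num.min (l x) (g x) <= Tpi pi (fun y => Num.min (l y) (g y)) x.
Proof.
rewrite /Tpi; have [p0 p1] := hpi x.
have H : Num.min (l x) (g x) <= \sum_(u : U) pi x u *
   Num.min (Num.max (Num.min (l (f x u)) (g (f x u))) (l x)) (g x).
  rewrite -[Num.min _ _]mul1r -p1 mulr_suml; apply: ler_sum => u _.
  by apply: ler_wpM2l => //; apply: mm_ge.
move: (Num.min (l x) (g x)) (\sum_(u : U) _) H => a b H.
have h2 : gamma * a <= gamma * b by apply: ler_wpM2l.
nra.
Qed.

Lemma Tpi_le_Topt V x : Tpi pi V x <= Topt V x.
Proof.
rewrite /Tpi /Topt lerD2l ler_pM2l //; have [p0 p1] := hpi x.
rewrite -[X in _ <= X]mul1r -p1 mulr_suml; apply: ler_sum => u _.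
by apply: ler_wpM2l => //; apply: mm_mono; apply: (maxU_ub (fun u => V (f x u))).
Qed.
End Conc.

Unset Implicit Arguments.
Theorem mainTheorem17 (R : realType) (X U : finType)
    (hX : (0 < #|X|)%N) (hU : (0 < #|U|)%N)
    (f : X -> U -> X) (l g : X -> R) (gamma : R)
    (hg0 : 0 < gamma) (hg1 : gamma < 1) :
  (forall pi : X -> {ffun U -> R}, stoch_policy pi ->
     forall x, V_RA_pi f l g gamma pi x <= V_RA_star f l g gamma x) /\
  (exists pis : X -> {ffun U -> R}, stoch_policy pis /\
     V_RA_pi f l g gamma pis = V_RA_star f l g gamma).
Proof.
have hg0w : 0 <= gamma by apply: ltW.
have exopt : exists V, RA_opt_eq f l g gamma V.
  have [V HV] := exist_fix (Topt_mono hU f l g hg0)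
    (Topt_B f l g hg0 hg1) (Topt_V0 f l g hg0).
  by exists V.
have Hs : forall x, V_RA_star f l g gamma x = Topt f l g gamma (V_RA_star f l g gamma) x.
  exact: (epsilon_spec _ _ exopt).
set Vs := V_RA_star f l g gamma in Hs *.
have Hpol : forall pi, stoch_policy pi ->
    forall x, V_RA_pi f l g gamma pi x = Tpi f l g gamma pi (V_RA_pi f l g gamma pi) x.
  move=> pi hpi.
  have expol : exists V, RA_policy_eq f l g gamma pi V.
    have [V HV] := exist_fix (Tpi_mono f l g hg0 hpi)
      (Tpi_B f l g hg0 hg1 hpi) (Tpi_V0 f l g hg0 hpi).
    by exists V.
  exact: (epsilon_spec _ _ expol).
split.
  move=> pi hpi x.
  apply: (compare (T := Topt f l g gamma) (Topt_mono hU f l g hg0) hg0w hg1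
     (Topt_shift hU f l g hg0)).
    by move=> y; rewrite {1}(Hpol pi hpi y); exact: (Tpi_le_Topt f l g hg0 hpi).
  by move=> y; rewrite -Hs.
have ex : forall x, exists u, maxU (fun u => Vs (f x u)) == Vs (f x u).
  by move=> x; have [u Hu] := maxU_arg hU (fun u => Vs (f x u)); exists u; apply/eqP.
pose us x := xchoose (ex x).
pose pis x := [ffun u : U => ((u == us x)%:R : R)].
have hpis : stoch_policy pis.
  move=> x; split; first by move=> u; rewrite ffunE ler0n.
  rewrite (bigD1 (us x)) //= ffunE eqxx big1 ?addr0 // => u /negbTE.
  by rewrite ffunE => ->.
exists pis; split => //.
have HVs : forall x, Vs x = Tpi f l g gamma pis Vs x.
  move=> x; rewrite Hs /Topt /Tpi (bigD1 (us x)) //= ffunE eqxx mul1r big1 ?addr0.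
    by rewrite -(eqP (xchooseP (ex x))).
  by move=> u /negbTE; rewrite ffunE => ->; rewrite mul0r.
have Hp := Hpol pis hpis.
apply: functional_extensionality => x; apply/eqP; rewrite eq_le; apply/andP; split.
  apply: (compare (T := Tpi f l g gamma pis) (Tpi_mono f l g hg0 hpis) hg0w hg1
     (Tpi_shift f l g hg0 hpis)).
    by move=> y; rewrite -Hp.
  by move=> y; rewrite -HVs.
apply: (compare (T := Tpi f l g gamma pis) (Tpi_mono f l g hg0 hpis) hg0w hg1
   (Tpi_shift f l g hg0 hpis)).
  by move=> y; rewrite -HVs.
by move=> y; rewrite -Hp.
Qed.
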